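(* For every $n\ge1$ and every $r\in\mathbb{N}\cup\{0\}$, every polynomial function $C_0\times\cdots\times C_r\to\mathbb{R}$ that is invariant under the natural action of $\mathrm{Gl}_n$ is constant.
   Context: $V=T_xX$ is an $n$-dimensional real vector space and $\mathrm{Gl}_n=\mathrm{Gl}(V)$. For $m\ge0$, $C_m\subseteq V\otimes(V^* )^{\otimes(m+2)}$ is the space of $(1,m+2)$-tensors $T^l_{ijk_1\dots k_m}$ symmetric in $k_1,\dots,k_m$ and whose symmetrization over all $m+2$ covariant indices vanishes; $\mathrm{Gl}_n$ acts on it by the standard tensorial action. *)

(* Defs.v *)
From HB Require Import structures.
From mathcomp Require Import all_boot all_order all_algebra all_fingroup.
Set Implicit Arguments. Unset Strict Implicit. Unset Printing Implicit Defensive.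
Import Order.TTheory GRing.Theory Num.Theory.
Local Open Scope ring_scope.

(* Covariant multi-index (i, j, k_1, ..., k_m) : m+2 indices in 'I_n. *)
Definition cov (n m : nat) := {ffun 'I_m.+2 -> 'I_n}.

(* A (1, m+2)-tensor on V = R^n : T^l_{w} with l : 'I_n, w : cov n m. *)
Definition tensor (R : Type) (n m : nat) := 'I_n -> cov n m -> R.

Definition permute_cov (n m : nat) (s : 'S_m.+2) (w : cov n m) : cov n m :=
  [ffun p => w (s p)].

(* Membership in C_m: symmetric in k_1..k_m (permutations of the slots fixing
   the first two slots), and the symmetrization over all m+2 covariant slots
   vanishes (we omit the nonzero factor 1/(m+2)!). *)
Definition in_C (R : realFieldType) (n m : nat) (T : tensor R n m) : Prop :=
  (forall s : 'S_m.+2, s ord0 = ord0 -> s (inord 1) = inord 1 ->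
     forall l w, T l (permute_cov s w) = T l w)
  /\ (forall l w, \sum_(s : 'S_m.+2) T l (permute_cov s w) = 0).

Definition tensor_act (R : realFieldType) (n m : nat) (g : 'M[R]_n)
  (T : tensor R n m) : tensor R n m :=
  fun l w => \sum_(a < n) \sum_(u : cov n m)
     g l a * T a u * \prod_(p < m.+2) (invmx g) (u p) (w p).

Definition config (R : realFieldType) (n r : nat) :=
  forall m : 'I_r.+1, tensor R n m.

Definition in_prod (R : realFieldType) (n r : nat) (T : config R n r) : Prop :=
  forall m : 'I_r.+1, in_C (T m).

Definition config_act (R : realFieldType) (n r : nat) (g : 'M[R]_n)
  (T : config R n r) : config R n r :=
  fun m => tensor_act g (T m).

Definition var (n r : nat) := {m : 'I_r.+1 & ('I_n * cov n m)%type}.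

Definition coords (R : realFieldType) (n r : nat) (T : config R n r)
  (x : var n r) : R := T (tag x) (tagged x).1 (tagged x).2.

Definition poly_fun_on (R : realFieldType) (n r : nat)
  (P : config R n r -> Prop) (F : config R n r -> R) : Prop :=
  exists s : seq (R * {ffun var n r -> nat}),
    forall T, P T ->
      F T = \sum_(c <- s) c.1 * \prod_(x : var n r) coords T x ^+ c.2 x.

(* Main.v *)
Require Import Defs.
From HB Require Import structures.
From mathcomp Require Import all_boot all_order all_algebra all_fingroup.
From Stdlib Require Import FunctionalExtensionality.
From mathcomp Require Import ring.
Set Implicit Arguments. Unset Strict Implicit.
Import Order.TTheory GRing.Theory Num.Theory.
Local Open Scope ring_scope.

Definition scl (R : realFieldType) (n r : nat) (l : R) (T : config R n r) : config R n r :=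
  fun m => fun a w => l ^+ (m.+1) * T m a w.

Lemma scl_in (R : realFieldType) (n r : nat) (l : R) (T : config R n r) :
  in_prod T -> in_prod (scl l T).
Proof.
move=> H m; have [H1 H2] := H m; split.
  by move=> s s0 s1 a w; rewrite /scl H1.
by move=> a w; rewrite /scl -mulr_sumr H2 mulr0.
Qed.

Lemma act_scl (R : realFieldType) (n r : nat) (l : R) (T : config R n r) :
  l != 0 -> config_act (l^-1)%:M T = scl l T.
Proof.
move=> l0; apply: functional_extensionality_dep => m.
apply: functional_extensionality => a; apply: functional_extensionality => w.
rewrite /config_act /tensor_act /scl invmx_scalar invrK.
rewrite (bigD1 a) //= [X in _ + X]big1 ?addr0; last first.
  move=> b ab; apply: big1 => u _; rewrite !mxE eq_sym (negbTE ab) mulr0n.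
  by rewrite !mul0r.
rewrite (bigD1 w) //= [X in _ + X]big1 ?addr0; last first.
  move=> u uw.
  have : ~~ [forall p, u p == w p].
    apply: contra uw => /forallP h; apply/eqP/ffunP => p; exact/eqP.
  move/forallPn => [p hp].
  by rewrite (bigD1 p) //= !mxE (negbTE hp) mulr0n mul0r mulr0.
have -> : \prod_(p < m.+2) (l%:M : 'M[R]_n) (w p) (w p) = l ^+ m.+2.
  by rewrite (eq_bigr (fun _ => l)) ?prodr_const ?card_ord // => p _; rewrite mxE eqxx mulr1n.
rewrite !mxE eqxx mulr1n exprS.
by set X := l ^+ m.+1; field.
Qed.

Theorem mainTheorem8 (R : realFieldType) (n r : nat) (F : config R n r -> R) :
  (0 < n)%N ->
  poly_fun_on (@in_prod R n r) F ->
  (forall g : 'M[R]_n, g \in unitmx ->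
     forall T, in_prod T -> F (config_act g T) = F T) ->
  forall T T', in_prod T -> in_prod T' -> F T = F T'.
Proof.
move=> _ [s Hs] Hinv.
have key : forall T, in_prod T -> F T = F (scl 0 T).
  move=> T HT.
  pose e (c : R * {ffun var n r -> nat}) := (\sum_(x : var n r) (tag x).+1 * c.2 x)%N.
  pose P : {poly R} := \sum_(c <- s)
     (c.1 * \prod_(x : var n r) coords T x ^+ c.2 x)%:P * 'X^(e c).
  have PE : forall l, P.[l] = F (scl l T).
    move=> l; rewrite Hs; last exact: scl_in.
    rewrite horner_sum; apply: eq_bigr => c _.
    rewrite hornerM hornerXn hornerC -mulrA; congr (_ * _).
    rewrite /e -prodrXr -big_split /=; apply: eq_bigr => x _.
    by rewrite /coords /scl exprMn exprM mulrC.
  have Pc : forall l, l != 0 -> P.[l] = F T.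
    move=> l l0; rewrite PE -act_scl //; apply: Hinv => //.
    by rewrite unitmxE det_scalar unitfE expf_neq0 // invr_eq0.
  have q0 : P - (F T)%:P = 0.
    apply/eqP/negPn/negP => nz.
    pose rs : seq R := [seq (i.+1)%:R | i <- iota 0 (size (P - (F T)%:P))].
    have h1 : all (root (P - (F T)%:P)) rs.
      apply/allP => x /mapP [i _ ->]; rewrite /root hornerD hornerN hornerC Pc ?subrr //.
      by rewrite pnatr_eq0.
    have h2 : uniq rs.
      rewrite map_inj_uniq ?iota_uniq // => i j /eqP; rewrite eqr_nat eqSS => /eqP //.
    have hs : size rs = size (P - (F T)%:P).
      by rewrite /rs size_map size_iota.
    have := max_poly_roots nz h1 h2.
    by rewrite hs ltnn.
  have := congr1 (fun p => p.[0]) q0; rewrite /= hornerD hornerN hornerC horner0 PE.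
  by move/eqP; rewrite subr_eq0 => /eqP ->.
move=> T T' HT HT'; rewrite (key T HT) (key T' HT').
rewrite (Hs _ (scl_in 0 HT)) (Hs _ (scl_in 0 HT')); apply: eq_bigr => c _.
congr (_ * _); apply: eq_bigr => x _; by rewrite /coords /scl expr0n /= !mul0r.
Qed.
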